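(* Let $G$ be a totally disconnected, locally compact group and $\mathcal{H}$ a group of automorphisms of $G$. Then the collection of bounded subsets of $\mathcal{H}$ is a bornological group structure on $\mathcal{H}$; that is, singleton sets are bounded, subsets of bounded sets are bounded, finite unions of bounded sets are bounded, and products $AB=\{\alpha\beta:\alpha\in A,\beta\in B\}$ and inverses $A^{-1}$ of bounded sets $A,B$ are bounded.
   Context: Automorphisms are continuous with continuous inverse. $\mathcal{B}(G)$ is the set of compact, open subgroups of $G$ with metric $d(V,W)=\log\bigl(|V:V\cap W|\cdot|W:W\cap V|\bigr)$. A set $B$ of automorphisms of $G$ is bounded if $B.V=\{\beta(V):\beta\in B\}$ has bounded diameter in $\mathcal{B}(G)$ for some (equivalently every) $V\in\mathcal{B}(G)$. *)

(* Defs.v *)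
From HB Require Import structures.
From mathcomp Require Import all_boot all_order all_algebra.
From mathcomp Require Import all_classical all_reals all_analysis.
From mathcomp Require Import finmap Rstruct Rstruct_topology.
Set Implicit Arguments. Unset Strict Implicit. Unset Printing Implicit Defensive.
Import Order.TTheory GRing.Theory Num.Theory.
Local Open Scope classical_set_scope.
Local Open Scope ring_scope.
Local Open Scope fset_scope.

Definition group_axioms (G : Type) (mul : G -> G -> G) (one : G) (inv : G -> G) :=
  [/\ forall x y z, mul x (mul y z) = mul (mul x y) z,
      forall x, mul one x = x,
      forall x, mul x one = x,
      forall x, mul (inv x) x = one &
      forall x, mul x (inv x) = one].

Definition tdlc_group (G : topologicalType) (mul : G -> G -> G) (one : G)
    (inv : G -> G) : Prop :=
  [/\ group_axioms mul one inv,
      continuous (fun p : G * G => mul p.1 p.2),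
      continuous inv,
      hausdorff_space G &
      locally_compact [set: G] /\ totally_disconnected [set: G]].

Definition automorphism (G : topologicalType) (mul : G -> G -> G)
    (alpha : G -> G) : Prop :=
  [/\ forall x y, alpha (mul x y) = mul (alpha x) (alpha y),
      continuous alpha &
      exists beta : G -> G,
        [/\ cancel alpha beta, cancel beta alpha & continuous beta]].

Definition automorphism_group (G : topologicalType) (mul : G -> G -> G)
    (H : set (G -> G)) : Prop :=
  [/\ forall a, H a -> automorphism mul a,
      H id,
      forall a b, H a -> H b -> H (a \o b) &
      forall a, H a -> exists2 b, H b & cancel a b /\ cancel b a].

Definition compact_open_subgroup (G : topologicalType) (mul : G -> G -> G)
    (one : G) (inv : G -> G) (V : set G) : Prop :=
  [/\ V one, forall x y, V x -> V y -> V (mul x y),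
      forall x, V x -> V (inv x), compact V & open V].

Definition lcosets (G : topologicalType) (mul : G -> G -> G) (V U : set G)
    : set (set G) :=
  [set [set mul x u | u in U] | x in V].

(* the index |V : U| (number of left cosets of U in V; 0 if infinite) *)
Definition index (G : topologicalType) (mul : G -> G -> G) (V U : set G) : nat :=
  #|` fset_set (lcosets mul V U)|%fset.

Definition dB (G : topologicalType) (mul : G -> G -> G) (V W : set G) : Rdefinitions.R :=
  ln ((index mul V (V `&` W) * index mul W (W `&` V))%N%:R).

Definition bounded_auts (G : topologicalType) (mul : G -> G -> G) (one : G)
    (inv : G -> G) (B : set (G -> G)) : Prop :=
  exists V : set G, compact_open_subgroup mul one inv V /\
    exists M : Rdefinitions.R, forall b c, B b -> B c -> dB mul (b @` V) (c @` V) <= M.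

Definition aut_prod (G : Type) (A B : set (G -> G)) : set (G -> G) :=
  [set a \o b | a in A & b in B].

Definition aut_inv (G : Type) (A : set (G -> G)) : set (G -> G) :=
  [set b | exists2 a, A a & cancel a b /\ cancel b a].

(* Main.v *)
Require Import Defs.
From HB Require Import structures.
From mathcomp Require Import all_boot all_order all_algebra.
From mathcomp Require Import all_classical all_reals all_analysis.
From mathcomp Require Import finmap Rstruct Rstruct_topology.
Set Implicit Arguments. Unset Strict Implicit. Unset Printing Implicit Defensive.
Import Order.TTheory GRing.Theory Num.Theory.
Local Open Scope classical_set_scope.
Lemma g_inv1 (G : Type) (mul : G -> G -> G) one inv :
  group_axioms mul one inv -> inv one = one.
Proof. by case=> _ _ h1 h2 _; rewrite -{2}(h2 one) h1. Qed.

Lemma g_invK (G : Type) (mul : G -> G -> G) one inv :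
  group_axioms mul one inv -> forall g, inv (inv g) = g.
Proof.
case=> hA h1 h2 h3 h4 g.
by rewrite -(h2 (inv (inv g))) -(h3 g) hA h3 h1.
Qed.

Lemma g_mulKV (G : Type) (mul : G -> G -> G) one inv :
  group_axioms mul one inv -> forall g w, mul g (mul (inv g) w) = w.
Proof. by case=> hA h1 h2 h3 h4 g w; rewrite hA h4 h1. Qed.

Lemma g_mulVK (G : Type) (mul : G -> G -> G) one inv :
  group_axioms mul one inv -> forall g w, mul (inv g) (mul g w) = w.
Proof. by case=> hA h1 h2 h3 h4 g w; rewrite hA h3 h1. Qed.

Lemma g_invM (G : Type) (mul : G -> G -> G) one inv :
  group_axioms mul one inv -> forall g h, inv (mul g h) = mul (inv h) (inv g).
Proof.
move=> hG g h; have [hA h1 h2 h3 h4] := hG.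
have e : mul (mul g h) (mul (inv h) (inv g)) = one.
  by rewrite -hA (g_mulKV hG) h4.
by rewrite -[LHS]h2 -e hA h3 h1.
Qed.
Definition subgrp (G : Type) (mul : G -> G -> G) (one : G) (inv : G -> G)
  (K : set G) :=
  [/\ K one, forall x y, K x -> K y -> K (mul x y) & forall x, K x -> K (inv x)].

Definition cov (G : choiceType) (mul : G -> G -> G) (X K : set G) (n : nat) :=
  exists s : seq G, (size s <= n)%N /\
    X `<=` \bigcup_(t in [set` s]) [set mul t u | u in K].

Lemma card_fset_seq (T : choiceType) (s : seq T) :
  (#|` fset_set [set` s]| <= size s)%N.
Proof.
have -> : [set` s] = [set` [fset x in s]%fset].
  by apply/seteqP; split => x /=; rewrite !inE.
by rewrite set_fsetK card_fseq size_undup.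
Qed.

Lemma coset_eq (G : Type) (mul : G -> G -> G) one inv (K : set G) t u :
  group_axioms mul one inv -> subgrp mul one inv K -> K u ->
  [set mul (mul t u) v | v in K] = [set mul t v | v in K].
Proof.
move=> hG [K1 KM KV] Ku; have [hA _ _ _ _] := hG.
apply/seteqP; split => _ [v Kv <-].
  by exists (mul u v); [apply: KM|rewrite hA].
exists (mul (inv u) v); first by apply: KM => //; apply: KV.
by rewrite -hA (g_mulKV hG).
Qed.

Lemma cov_lcosets_sub (G : topologicalType) (mul : G -> G -> G) one inv
    (X K : set G) n :
  group_axioms mul one inv -> subgrp mul one inv K -> cov mul X K n ->
  exists s' : seq (set G), (size s' <= n)%N /\ lcosets mul X K `<=` [set` s'].
Proof.
move=> hG sK [s [sz XC]].
exists (map (fun t => [set mul t u | u in K]) s); split; first by rewrite size_map.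
move=> _ [x Xx <-]; have [t ts [u Ku e]] := XC x Xx.
rewrite /= -e (coset_eq t hG sK Ku); apply/mapP; exists t => //.
Qed.

Lemma cov_index (G : topologicalType) (mul : G -> G -> G) one inv (X K : set G) n :
  group_axioms mul one inv -> subgrp mul one inv K -> cov mul X K n ->
  (Defs.index mul X K <= n)%N.
Proof.
move=> hG sK hc; have [s' [sz sub]] := cov_lcosets_sub hG sK hc.
have fM := finite_seq s'.
have fL := sub_finite_set sub fM.
have h : (fset_set (lcosets mul X K) `<=` fset_set [set` s'])%fset.
  by rewrite -fset_set_sub.
rewrite /Defs.index; apply: leq_trans (fsubset_leq_card h) _.
exact: leq_trans (card_fset_seq s') sz.
Qed.

Lemma cov_finite (G : topologicalType) (mul : G -> G -> G) one inv (X K : set G) n :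
  group_axioms mul one inv -> subgrp mul one inv K -> cov mul X K n ->
  finite_set (lcosets mul X K).
Proof.
move=> hG sK hc; have [s' [sz sub]] := cov_lcosets_sub hG sK hc.
exact: sub_finite_set sub (finite_seq s').
Qed.

Lemma index_cov (G : topologicalType) (mul : G -> G -> G) one inv (X K : set G) :
  group_axioms mul one inv -> subgrp mul one inv K ->
  finite_set (lcosets mul X K) -> cov mul X K (Defs.index mul X K).
Proof.
move=> hG [K1 KM KV] fL; have [hA h1 h2 h3 h4] := hG.
pose rep (c : set G) := xget one [set x | X x /\ c = [set mul x u | u in K]].
exists (map rep (fset_set (lcosets mul X K))); split.
  by rewrite size_map.
move=> x Xx.
pose c := [set mul x u | u in K].
have Lc : lcosets mul X K c by exists x.
have hr : [set x | X x /\ c = [set mul x u | u in K]] (rep c).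
  by apply: xgetPex; exists x.
case: hr => Xr cr.
exists (rep c).
  rewrite /= ; apply/mapP; exists c => //.
  by rewrite in_fset_set //; apply/mem_set.
have : c x by exists one => //; rewrite h2.
by move=> cx; rewrite -cr.
Qed.

Lemma index_pos (G : topologicalType) (mul : G -> G -> G) (X K : set G) x :
  finite_set (lcosets mul X K) -> X x -> (0 < Defs.index mul X K)%N.
Proof.
move=> fL Xx; rewrite /Defs.index cardfs_gt0; apply/negP => /eqP e.
have : [set mul x u | u in K] \in fset_set (lcosets mul X K).
  by rewrite in_fset_set //; apply/mem_set; exists x.
by rewrite e inE.
Qed.
Lemma lmul_cont (G : topologicalType) (mul : G -> G -> G) :
  continuous (fun p : G * G => mul p.1 p.2) -> forall a, continuous (mul a).
Proof.
move=> cm a w.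
have h : {for w, continuous (fun w : G => (a, w))}.
  by apply: cvg_pair; [exact: cvg_cst|exact: cvg_id].
exact: (continuous_comp h (cm (a, w))).
Qed.
Arguments lmul_cont {G mul} cm a.
Lemma cov_trans (G : choiceType) (mul : G -> G -> G) one inv (X Y Z : set G)
    m n :
  group_axioms mul one inv -> subgrp mul one inv X -> subgrp mul one inv Z ->
  cov mul X (X `&` Y) m -> cov mul Y (Y `&` Z) n -> cov mul X (X `&` Z) (m * n).
Proof.
move=> hG [X1 XM XV] [Z1 ZM ZV] [R [szR XR]] [S [szS YS]].
have [hA h1 h2 h3 h4] := hG.
pose P r s := [set t | X t /\ exists2 w, (Y `&` Z) w & t = mul (mul r s) w].
pose tf r s := xget r (P r s).
exists [seq tf r s | r <- R, s <- S]; split.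
  by rewrite size_allpairs; apply: leq_mul.
move=> x Xx.
have [r rR [y [Xy Yy] e1]] := XR x Xx.
have [s sS [z [Yz Zz] e2]] := YS y Yy.
have ex : x = mul (mul r s) z by rewrite -e1 -e2 hA.
have : P r s (tf r s) by apply: xgetPex; exists x; split => //; exists z.
case=> Xt [w [Yw Zw] et].
exists (tf r s); first by apply: allpairs_f.
have key : mul (tf r s) (mul (inv w) z) = x.
  by rewrite et -hA (g_mulKV hG) ex.
exists (mul (inv w) z) => //; split; last by apply: ZM => //; apply: ZV.
have -> : mul (inv w) z = mul (inv (tf r s)) x by rewrite -key (g_mulVK hG).
by apply: XM => //; apply: XV.
Qed.

Lemma cov_aut (G : choiceType) (mul : G -> G -> G) (a : G -> G)
    (X Y : set G) n :
  (forall x y, a (mul x y) = mul (a x) (a y)) ->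
  cov mul X (X `&` Y) n -> cov mul (a @` X) (a @` X `&` a @` Y) n.
Proof.
move=> ha [s [sz XC]]; exists (map a s); split; first by rewrite size_map.
move=> _ [x Xx <-]; have [t ts [u [Xu Yu] e]] := XC x Xx.
exists (a t); first by apply/mapP; exists t.
by exists (a u); [split; exists u|rewrite -e ha].
Qed.

Lemma cov_mono (G : choiceType) (mul : G -> G -> G) (X K : set G) m n :
  (m <= n)%N -> cov mul X K m -> cov mul X K n.
Proof. by move=> mn [s [sz h]]; exists s; split => //; apply: leq_trans mn. Qed.

Lemma cov_refl (G : choiceType) (mul : G -> G -> G) one inv (X : set G) :
  group_axioms mul one inv -> cov mul X (X `&` X) 1.
Proof.
move=> [_ h1 _ _ _]; exists [:: one]; split => // x Xx.
by exists one; [rewrite /= inE|exists x; [split|rewrite h1]].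
Qed.

Lemma cov_compact (G : topologicalType) (mul : G -> G -> G) one inv
    (X K : set G) :
  group_axioms mul one inv -> continuous (fun p : G * G => mul p.1 p.2) ->
  compact X -> open K -> K one -> exists n, cov mul X K n.
Proof.
move=> hG cm cX oK K1; have [hA h1 h2 h3 h4] := hG.
pose F := [set P : set (seq G) | exists s0 : seq G,
  forall s : seq G, {subset s0 <= s} -> P s].
have FF : Filter F.
  split.
  - by exists [::].
  - move=> P Q [s1 h1'] [s2 h2']; exists (s1 ++ s2) => s sub; split.
      by apply: h1' => y ys; apply: sub; rewrite mem_cat ys.
    by apply: h2' => y ys; apply: sub; rewrite mem_cat ys orbT.
  - by move=> P Q PQ [s0 h]; exists s0 => s /h /PQ.
have := (iffLR (compact_near_coveringP X)) cX (seq G) F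
  (fun s y => (\bigcup_(t in [set` s]) [set mul t u | u in K]) y) FF.
case.
  move=> y Xy.
  have oc : open [set mul y u | u in K].
    have -> : [set mul y u | u in K] = mul (inv y) @^-1` K.
      apply/seteqP; split => w.
        by move=> [u Ku <-]; rewrite /= (g_mulVK hG).
      by move=> /= Kw; exists (mul (inv y) w) => //; rewrite (g_mulKV hG).
    exact: (iffLR (continuousP _) (lmul_cont cm (inv y)) K oK).
  exists ([set mul y u | u in K], [set s | y \in s]); first split.
  - apply: open_nbhs_nbhs; split => //; exists one => //.
  - by exists [:: y] => s; apply; rewrite inE.
  - by case=> y' s /= [cy ys]; exists y.
move=> s0 h; exists (size s0); exists s0; split => //.
exact: h.
Qed.
Lemma hom_one (G : Type) (mul : G -> G -> G) one inv (a : G -> G) :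
  group_axioms mul one inv -> (forall x y, a (mul x y) = mul (a x) (a y)) ->
  a one = one.
Proof.
move=> hG ha; have [hA h1 h2 h3 h4] := hG.
have e : a one = mul (a one) (a one) by rewrite -ha h1.
by have := g_mulVK hG (a one) (a one); rewrite -e h3 => e2; rewrite -e2.
Qed.

Lemma hom_inv (G : Type) (mul : G -> G -> G) one inv (a : G -> G) :
  group_axioms mul one inv -> (forall x y, a (mul x y) = mul (a x) (a y)) ->
  forall x, a (inv x) = inv (a x).
Proof.
move=> hG ha x; have [hA h1 h2 h3 h4] := hG.
have e : mul (a (inv x)) (a x) = one by rewrite -ha h3 (hom_one hG ha).
by rewrite -[LHS]h2 -(h4 (a x)) hA e h1.
Qed.

Lemma subgrp_image (G : Type) (mul : G -> G -> G) one inv (a : G -> G) V :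
  group_axioms mul one inv -> (forall x y, a (mul x y) = mul (a x) (a y)) ->
  subgrp mul one inv V -> subgrp mul one inv (a @` V).
Proof.
move=> hG ha [V1 VM VV]; split.
- by exists one => //; rewrite (hom_one hG ha).
- by move=> _ _ [x Vx <-] [y Vy <-]; exists (mul x y); [apply: VM|rewrite ha].
- by move=> _ [x Vx <-]; exists (inv x); [apply: VV|rewrite (hom_inv hG ha)].
Qed.

Lemma subgrpI (G : Type) (mul : G -> G -> G) one inv X Y :
  subgrp mul one inv X -> subgrp mul one inv Y -> subgrp mul one inv (X `&` Y).
Proof.
move=> [X1 XM XV] [Y1 YM YV]; split => //.
- by move=> x y [? ?] [? ?]; split; [apply: XM|apply: YM].
- by move=> x [? ?]; split; [apply: XV|apply: YV].
Qed.

Lemma cos_subgrp (G : topologicalType) (mul : G -> G -> G) one inv V :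
  compact_open_subgroup mul one inv V -> subgrp mul one inv V.
Proof. by case. Qed.

Lemma cos_image (G : topologicalType) (mul : G -> G -> G) one inv a V :
  group_axioms mul one inv -> automorphism mul a ->
  compact_open_subgroup mul one inv V ->
  compact_open_subgroup mul one inv (a @` V).
Proof.
move=> hG [ha ca [b [ab ba cb]]] cV.
have [S1 SM SV] := subgrp_image hG ha (cos_subgrp cV).
case: cV => _ _ _ cV oV; split => //.
  exact: (continuous_compact (continuous_subspaceT ca) cV).
have -> : a @` V = b @^-1` V.
  apply/seteqP; split => y.
    by move=> [x Vx <-]; rewrite /= ab.
  by move=> /= Vby; exists (b y) => //; rewrite ba.
exact: (iffLR (continuousP _) cb V oV).
Qed.

Lemma cos_cov (G : topologicalType) (mul : G -> G -> G) one inv X Y :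
  group_axioms mul one inv -> continuous (fun p : G * G => mul p.1 p.2) ->
  compact_open_subgroup mul one inv X -> compact_open_subgroup mul one inv Y ->
  exists n, cov mul X (X `&` Y) n.
Proof.
move=> hG cm [X1 _ _ cX oX] [Y1 _ _ _ oY].
by apply: (cov_compact hG cm cX) => //; apply: openI.
Qed.

Lemma image_cancel (T : Type) (a b : T -> T) (V : set T) :
  cancel a b -> b @` (a @` V) = V.
Proof.
move=> ab; apply/seteqP; split.
  by move=> _ [_ [x Vx <-] <-]; rewrite ab.
by move=> x Vx; exists (a x); [exists x|rewrite ab].
Qed.
Definition bnd (G : topologicalType) (mul : G -> G -> G) (one : G)
    (inv : G -> G) (B : set (G -> G)) :=
  exists V, compact_open_subgroup mul one inv V /\
    exists n, forall b c, B b -> B c -> cov mul (b @` V) (b @` V `&` c @` V) n.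

Lemma bnd_bounded (G : topologicalType) (mul : G -> G -> G) one inv
    (B : set (G -> G)) :
  group_axioms mul one inv -> (forall b, B b -> automorphism mul b) ->
  bnd mul one inv B -> bounded_auts mul one inv B.
Proof.
move=> hG aB [V [cV [n hn]]]; exists V; split => //.
exists (ln ((n * n).+1%:R : Rdefinitions.R)) => b c Bb Bc.
have sV := cos_subgrp cV.
have [hb _ _] := aB b Bb; have [hc _ _] := aB c Bc.
have sb := subgrp_image hG hb sV; have sc := subgrp_image hG hc sV.
have i1 := cov_index hG (subgrpI sb sc) (hn b c Bb Bc).
have i2 := cov_index hG (subgrpI sc sb) (hn c b Bc Bb).
have pn := leq_mul i1 i2.
rewrite /dB; set p := (_ * _)%N in pn *.
have [->|p0] := eqVneq p 0%N.
  by rewrite ln0 // ln_ge0 // ler1n.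
rewrite ler_ln ?posrE ?ltr0n ?lt0n // ler_nat.
exact: leq_trans pn (leqnSn _).
Qed.

Lemma bounded_bnd (G : topologicalType) (mul : G -> G -> G) one inv
    (B : set (G -> G)) :
  group_axioms mul one inv -> continuous (fun p : G * G => mul p.1 p.2) ->
  (forall b, B b -> automorphism mul b) ->
  bounded_auts mul one inv B -> bnd mul one inv B.
Proof.
move=> hG cm aB [V [cV [M hM]]]; exists V; split => //.
exists (Num.Def.trunc (expR M)).+1 => b c Bb Bc.
have sV := cos_subgrp cV.
have [hb _ _] := aB b Bb; have [hc _ _] := aB c Bc.
have sb := subgrp_image hG hb sV; have sc := subgrp_image hG hc sV.
have cb := cos_image hG (aB b Bb) cV; have cc := cos_image hG (aB c Bc) cV.
have [k1 hk1] := cos_cov hG cm cb cc.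
have [k2 hk2] := cos_cov hG cm cc cb.
have f1 := cov_finite hG (subgrpI sb sc) hk1.
have f2 := cov_finite hG (subgrpI sc sb) hk2.
have [V1 _ _ _ _] := cV.
have p1 := index_pos f1 (ex_intro2 _ _ one V1 erefl : (b @` V) (b one)).
have p2 := index_pos f2 (ex_intro2 _ _ one V1 erefl : (c @` V) (c one)).
apply: (cov_mono _ (index_cov hG (subgrpI sb sc) f1)).
have hd := hM b c Bb Bc; rewrite /dB in hd.
set i1 := Defs.index _ _ _ in p1 hd *; set i2 := Defs.index _ _ _ in p2 hd.
apply: leq_trans (leq_pmulr i1 p2) _.
rewrite -(ler_nat Rdefinitions.R).
apply: le_trans (ltW (truncnS_gt (expR M))).
have pos : (((i1 * i2)%N)%:R%R : Rdefinitions.R) \is Num.pos.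
  by rewrite posrE ltr0n muln_gt0 p1 p2.
by rewrite -(lnK pos) ler_expR.
Qed.
From mathcomp Require Import zify.

Lemma cov_trans3 (G : choiceType) (mul : G -> G -> G) one inv
    (X Y Z W : set G) a b c :
  group_axioms mul one inv -> subgrp mul one inv X -> subgrp mul one inv Z ->
  subgrp mul one inv W ->
  cov mul X (X `&` Y) a -> cov mul Y (Y `&` Z) b -> cov mul Z (Z `&` W) c ->
  cov mul X (X `&` W) (a * b * c).
Proof.
move=> hG sX sZ sW h1 h2 h3.
exact: (cov_trans hG sX sW (cov_trans hG sX sZ h1 h2) h3).
Qed.

Lemma part3 (G : topologicalType) (mul : G -> G -> G) one inv
    (H A B : set (G -> G)) :
  group_axioms mul one inv -> continuous (fun p : G * G => mul p.1 p.2) ->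
  (forall a, H a -> automorphism mul a) -> A `<=` H -> B `<=` H ->
  bnd mul one inv A -> bnd mul one inv B -> bnd mul one inv (A `|` B).
Proof.
move=> hG cm aH AH BH bA bB.
have [[a0 Aa0]|nA] := pselect (exists a, A a); last first.
  have -> : A `|` B = B.
    by apply/seteqP; split => [x [Ax|//]|x Bx]; [case: nA; exists x|right].
  exact: bB.
have [[b0 Bb0]|nB] := pselect (exists b, B b); last first.
  have -> : A `|` B = A.
    by apply/seteqP; split => [x [//|Bx]|x Ax]; [case: nB; exists x|left].
  exact: bA.
case: bA => V [cV [m hm]]; case: bB => W [cW [n hn]].
have aut x : (A `|` B) x -> automorphism mul x by move=> [/AH|/BH]; apply: aH.
have hom x : (A `|` B) x -> forall y z, x (mul y z) = mul (x y) (x z).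
  by move=> /aut [].
have sg x X : (A `|` B) x -> compact_open_subgroup mul one inv X ->
    subgrp mul one inv (x @` X).
  by move=> Hx cX; apply: (subgrp_image hG (hom x Hx)); apply: cos_subgrp.
have cs x X : (A `|` B) x -> compact_open_subgroup mul one inv X ->
    compact_open_subgroup mul one inv (x @` X).
  by move=> Hx; apply: cos_image => //; apply: aut.
have [k1 hk1] := cos_cov hG cm cV cW.
have [k2 hk2] := cos_cov hG cm cW cV.
have [c0 hc0] := cos_cov hG cm (cs a0 V (or_introl Aa0) cV)
  (cs b0 V (or_intror Bb0) cV).
have [c1 hc1] := cos_cov hG cm (cs b0 V (or_intror Bb0) cV)
  (cs a0 V (or_introl Aa0) cV).
have BB b b' : B b -> B b' ->
    cov mul (b @` V) (b @` V `&` b' @` V) (k1 * n * k2).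
  move=> Bb Bb'.
  apply: (cov_trans3 hG (sg b V (or_intror Bb) cV) (sg b' W (or_intror Bb') cW)
    (sg b' V (or_intror Bb') cV)).
  - exact: (cov_aut (hom b (or_intror Bb)) hk1).
  - exact: hn.
  - exact: (cov_aut (hom b' (or_intror Bb')) hk2).
pose K := (k1 * n * k2)%N.
exists V; split => //.
exists (m * c0 * K + K * c1 * m + m + K)%N => x y Hx Hy.
case: Hx => [Ax|Bx]; case: Hy => [Ay|By].
- by apply: (cov_mono _ (hm x y Ax Ay)); lia.
- apply: (cov_mono _ (cov_trans3 hG (sg x V (or_introl Ax) cV)
    (sg b0 V (or_intror Bb0) cV) (sg y V (or_intror By) cV)
    (hm x a0 Ax Aa0) hc0 (BB b0 y Bb0 By))).
  rewrite /K; lia.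
- apply: (cov_mono _ (cov_trans3 hG (sg x V (or_intror Bx) cV)
    (sg a0 V (or_introl Aa0) cV) (sg y V (or_introl Ay) cV)
    (BB x b0 Bx Bb0) hc1 (hm a0 y Aa0 Ay))).
  rewrite /K; lia.
- by apply: (cov_mono _ (BB x y Bx By)); rewrite /K; lia.
Qed.

Lemma part4 (G : topologicalType) (mul : G -> G -> G) one inv
    (H A B : set (G -> G)) :
  group_axioms mul one inv -> continuous (fun p : G * G => mul p.1 p.2) ->
  (forall a, H a -> automorphism mul a) -> A `<=` H -> B `<=` H ->
  bnd mul one inv A -> bnd mul one inv B -> bnd mul one inv (aut_prod A B).
Proof.
move=> hG cm aH AH BH bA bB.
case: bA => V [cV [m hm]].
have [[b0 Bb0]|nB] := pselect (exists b, B b); last first.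
  by exists V; split => //; exists 0%N => f c [a Aa [b Bb _]]; case: nB; exists b.
case: bB => W [cW [n hn]].
have hom x : H x -> forall y z, x (mul y z) = mul (x y) (x z).
  by move=> /aH [].
have cs x X : H x -> compact_open_subgroup mul one inv X ->
    compact_open_subgroup mul one inv (x @` X).
  by move=> Hx; apply: cos_image => //; apply: aH.
have sg x X : H x -> compact_open_subgroup mul one inv X ->
    subgrp mul one inv (x @` X).
  by move=> Hx cX; apply: cos_subgrp; apply: cs.
have [k1 hk1] := cos_cov hG cm cV cW.
have [k2 hk2] := cos_cov hG cm cW cV.
have cX := cs b0 V (BH _ Bb0) cV.
have [e1 he1] := cos_cov hG cm cX cV.
have [e2 he2] := cos_cov hG cm cV cX.
have BB b b' : B b -> B b' ->
    cov mul (b @` V) (b @` V `&` b' @` V) (k1 * n * k2).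
  move=> Bb Bb'.
  apply: (cov_trans3 hG (sg b V (BH _ Bb) cV) (sg b' W (BH _ Bb') cW)
    (sg b' V (BH _ Bb') cV)).
  - exact: (cov_aut (hom b (BH _ Bb)) hk1).
  - exact: hn.
  - exact: (cov_aut (hom b' (BH _ Bb')) hk2).
pose K := (k1 * n * k2)%N.
exists V; split => //.
exists (K * (e1 * m * e2) * K)%N => _ _ [a Aa [b Bb <-]] [a' Aa' [b' Bb' <-]].
rewrite -(image_comp b a) -(image_comp b' a').
have Ha := AH _ Aa; have Ha' := AH _ Aa'.
apply: (cov_trans3 hG (sg a _ Ha (cs b V (BH _ Bb) cV)) (sg a' _ Ha' cX)
  (sg a' _ Ha' (cs b' V (BH _ Bb') cV))).
- exact: (cov_aut (hom a Ha) (BB b b0 Bb Bb0)).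
- apply: (cov_trans3 hG (sg a _ Ha cX) (sg a' _ Ha' cV) (sg a' _ Ha' cX)).
  + exact: (cov_aut (hom a Ha) he1).
  + exact: hm.
  + exact: (cov_aut (hom a' Ha') he2).
- exact: (cov_aut (hom a' Ha') (BB b0 b' Bb0 Bb')).
Qed.

Lemma part5 (G : topologicalType) (mul : G -> G -> G) one inv
    (H A : set (G -> G)) :
  group_axioms mul one inv -> continuous (fun p : G * G => mul p.1 p.2) ->
  automorphism_group mul H -> A `<=` H ->
  bnd mul one inv A -> bnd mul one inv (aut_inv A).
Proof.
move=> hG cm [aH _ _ iH] AH bA.
case: bA => V [cV [m hm]].
have [[a0 Aa0]|nA] := pselect (exists a, A a); last first.
  by exists V; split => //; exists 0%N => f c [a Aa _]; case: nA; exists a.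
have hom x : H x -> forall y z, x (mul y z) = mul (x y) (x z).
  by move=> /aH [].
have cs x X : H x -> compact_open_subgroup mul one inv X ->
    compact_open_subgroup mul one inv (x @` X).
  by move=> Hx; apply: cos_image => //; apply: aH.
have sg x X : H x -> compact_open_subgroup mul one inv X ->
    subgrp mul one inv (x @` X).
  by move=> Hx cX; apply: cos_subgrp; apply: cs.
have invH b : aut_inv A b -> H b.
  move=> [a Aa [ab ba]]; have [b' Hb' [ab' b'a]] := iH a (AH _ Aa).
  have -> : b = b' by apply/funext => y; rewrite -{1}(b'a y) ab.
  exact: Hb'.
have sV := cos_subgrp cV.
have Ha0 := AH _ Aa0.
have [e1 he1] := cos_cov hG cm cV (cs a0 V Ha0 cV).
have [e2 he2] := cos_cov hG cm (cs a0 V Ha0 cV) cV.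
exists V; split => //.
exists (e1 * m * (m * e2))%N => b b' Ib Ib'.
have Hb := invH b Ib; have Hb' := invH b' Ib'.
case: Ib => a Aa [ab ba]; case: Ib' => a' Aa' [ab' b'a].
have Ha := AH _ Aa; have Ha' := AH _ Aa'.
have h1 : cov mul (a' @` V) (a' @` V `&` V) (m * e2).
  exact: (cov_trans hG (sg a' V Ha' cV) sV (hm a' a0 Aa' Aa0) he2).
have h2 : cov mul V (V `&` b' @` V) (m * e2).
  have := cov_aut (hom b' Hb') h1; rewrite image_cancel //.
have h3 : cov mul V (V `&` a @` (b' @` V)) (e1 * m * (m * e2)).
  apply: (cov_trans3 hG sV (sg a V Ha cV) (sg a _ Ha (cs b' V Hb' cV))).
  - exact: he1.
  - exact: hm.
  - exact: (cov_aut (hom a Ha) h2).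
have := cov_aut (hom b Hb) h3; rewrite (@image_cancel _ a b (b' @` V) ab).
by [].
Qed.
Lemma fip_closed (T : topologicalType) (CC : set (set T)) (K : set T) :
  compact K -> (forall C, CC C -> closed C) ->
  (exists C, CC C) ->
  (forall C1 C2, CC C1 -> CC C2 -> CC (C1 `&` C2)) ->
  (forall C, CC C -> C `&` K !=set0) ->
  exists z, K z /\ forall C, CC C -> C z.
Proof.
move=> cK clC [C0 CC0] CI CK.
pose F := [set S | exists2 C, CC C & C `&` K `<=` S].
have FF : Filter F.
  split.
  - by exists C0.
  - move=> P Q [C1 h1 s1] [C2 h2 s2]; exists (C1 `&` C2); first exact: CI.
    by move=> y [[y1 y2] yK]; split; [apply: s1|apply: s2].
  - by move=> P Q PQ [C h s]; exists C => // y /s /PQ.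
have PF : ProperFilter F.
  split => //; move=> [C h s]; have [y yC] := CK C h; exact: (s y yC).
have FK : F K by exists C0 => // y [].
have [z [Kz clz]] := cK F PF FK.
exists z; split => // C hC; apply: (clC C hC) => B nB.
have := clz C B _ nB; apply; by exists C => // y [].
Qed.
Lemma sep_closed (T : topologicalType) (N P R : set T) : hausdorff_space T ->
  compact N -> P `<=` N° -> closed P -> closed R -> P `&` R = set0 ->
  exists U V, [/\ open U, open V, P `<=` U, R `<=` V & U `&` V = set0].
Proof.
move=> hT cN PN clP clR PR.
have := @compact_normal_local T N hT cN P PN clP (~` R).
case.
  apply/set_nbhsP; exists (~` R); split => //; first exact: closed_openC.
  by move=> y Py Ry; have : (P `&` R) y by []; rewrite PR.
move=> U0 /set_nbhsP [U [oU PU UU0]] clU0.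
exists U, (~` closure U0); split => //.
- exact/closed_openC/closed_closure.
- by move=> y Ry cy; exact: (clU0 y cy Ry).
- apply/seteqP; split => // y [Uy]; apply; apply: subset_closure; exact: UU0.
Qed.
Lemma compact_open_nbhs (T : topologicalType) (x : T) :
  hausdorff_space T -> locally_compact [set: T] -> totally_disconnected [set: T] ->
  exists C, [/\ C x, open C & compact C].
Proof.
move=> hT lc td.
have [N nN [cN clN]] := lc x I.
have nxN : nbhs x N by move: nN; rewrite withinET.
have reg := compact_regular hT cN nxN.
have [D nD DW] : filter_from (nbhs x) closure (N°).
  by apply: reg; apply: nbhs_interior.
pose N0 := closure D.
have N0N : N0 `<=` N° := DW.
have cN0 : compact N0.
  apply: (subclosed_compact _ cN); first exact: closed_closure.
  by move=> y /N0N; apply: interior_subset.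
have nxN0 : nbhs x N0 by apply: filterS nD; apply: subset_closure.
pose CC := [set C : set T | [/\ C `<=` N0, closed C, closed (N0 `\` C) & C x]].
have CCN0 : CC N0.
  split => //; first exact: closed_closure.
  by rewrite setDv; exact: closed0.
  exact: nbhs_singleton.
have CI : forall C1 C2, CC C1 -> CC C2 -> CC (C1 `&` C2).
  move=> C1 C2 [s1 c1 d1 x1] [s2 c2 d2 x2]; split => //.
  - by move=> y [/s1].
  - exact: closedI.
  - by rewrite setDIr; exact: closedU.
have clCC : forall C, CC C -> closed C by move=> C [].
pose Q := \bigcap_(C in CC) C.
have clQ : closed Q by apply: closed_bigI.
have QN0 : Q `<=` N0 by move=> y; apply.
have Qx : Q x by move=> C [].
have step : forall P R, closed P -> closed R -> P `&` R = set0 ->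
    Q = P `|` R -> P x -> R = set0.
  move=> P R clP clR PR QPR Px.
  have PN : P `<=` N° by move=> y Py; apply: N0N; apply: QN0; rewrite QPR; left.
  have [U [V [oU oV PU RV UV]]] := sep_closed hT cN PN clP clR PR.
  have [C CCC CUV] : exists2 C, CC C & C `<=` U `|` V.
    apply: contrapT => hn.
    pose K := N0 `\` (U `|` V).
    have clK : closed K by apply: closedI; [exact: closed_closure|
      exact/open_closedC/openU].
    have cK : compact K by apply: (subclosed_compact clK cN0) => y [].
    have [z [[_ Kz] Qz]] : exists z, K z /\ forall C, CC C -> C z.
      apply: fip_closed => //; first by exists N0.
      move=> C CCC; apply: contrapT => /set0P/negP; rewrite negbK => /eqP e.
      apply: hn; exists C => // y Cy; apply: contrapT => nUV.
      have : (C `&` K) y by split => //; split => //; case: CCC => + _ _ _; apply.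
      by rewrite e.
    apply: Kz; have : Q z by [].
    by rewrite QPR => -[/PU|/RV]; [left|right].
  have CC' : CC (C `&` U).
    case: CCC => sC cC dC xC; split.
    - by move=> y [/sC].
    - have -> : C `&` U = C `&` ~` V.
        apply/seteqP; split => y [Cy h]; split => //.
          by move=> Vy; have : (U `&` V) y by []; rewrite UV.
        by case: (CUV y Cy).
      by apply: closedI => //; apply: open_closedC.
    - have -> : N0 `\` (C `&` U) = (N0 `\` C) `|` (C `&` ~` U).
        apply/seteqP; split => y.
          move=> [N0y nCU]; have [Cy|nCy] := pselect (C y).
            by right; split => // Uy; apply: nCU.
          by left.
        by move=> [[N0y nCy]|[Cy nUy]]; split => //; [move=> [] | apply: sC|
          move=> []].
      by apply: closedU => //; apply: closedI => //; apply: open_closedC.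
    - by split => //; apply: PU.
  apply/seteqP; split => // y Ry.
  have Qy : Q y by rewrite QPR; right.
  have [_ Uy] := Qy _ CC'.
  have : (U `&` V) y by split => //; apply: RV.
  by rewrite UV.
have conQ : connected Q.
  move=> B nB0 [Op oOp BQOp] [Cl clCl BQCl].
  have clB : closed B by rewrite BQCl; exact: closedI.
  pose R := Q `&` ~` Op.
  have clR : closed R by apply: closedI => //; apply: open_closedC.
  have QBR : Q = B `|` R.
    apply/seteqP; split => y.
      by move=> Qy; have [Oy|nOy] := pselect (Op y); [left; rewrite BQOp|right].
    by move=> [|[]//]; rewrite BQOp => -[].
  have BR : B `&` R = set0.
    by apply/seteqP; split => // y []; rewrite BQOp => -[_ Oy] [_].
  have [Bx|nBx] := pselect (B x).
    have R0 := step B R clB clR BR QBR Bx.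
    by rewrite QBR R0 setU0.
  have Rx : R x by split => // Opx; apply: nBx; rewrite BQOp.
  have := step R B clR clB _ _ Rx.
  rewrite setIC BR setUC -QBR => /(_ erefl erefl) Bempty.
  by case: nB0 => y; rewrite Bempty.
have QW : exists2 C, CC C & C `<=` N0°.
  apply: contrapT => hn.
  pose K := N0 `\` N0°.
  have clK : closed K by apply: closedI; [exact: closed_closure|
    exact/open_closedC/open_interior].
  have cK : compact K by apply: (subclosed_compact clK cN0) => y [].
  have [z [[_ Kz] Qz]] : exists z, K z /\ forall C, CC C -> C z.
    apply: fip_closed => //; first by exists N0.
    move=> C CCC; apply: contrapT => /set0P/negP; rewrite negbK => /eqP e.
    apply: hn; exists C => // y Cy; apply: contrapT => nW.
    have : (C `&` K) y by split => //; split => //; case: CCC => + _ _ _; apply.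
    by rewrite e.
  have : connected_component [set: T] x z.
    exists Q => //; split => //.
  rewrite td // => zx; apply: Kz; rewrite zx.
  exact: nxN0.
case: QW => C [sC cC dC xC] CW.
exists C; split => //.
  have -> : C = N0° `&` ~` (N0 `\` C).
    apply/seteqP; split => y.
      by move=> Cy; split; [apply: CW|move=> []].
    by move=> [/interior_subset N0y h]; apply: contrapT => nC; apply: h.
  by apply: openI; [exact: open_interior|exact: closed_openC].
exact: (subclosed_compact cC cN0).
Qed.
Lemma cos_exists (G : topologicalType) (mul : G -> G -> G) one inv :
  tdlc_group mul one inv -> exists V, compact_open_subgroup mul one inv V.
Proof.
case=> hG cm ci hT [lc td].
have [hA h1 h2 h3 h4] := hG.
have [C [Cone oC cC]] := compact_open_nbhs one hT lc td.
have clC : closed C := compact_closed hT cC.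
pose S := [set g | forall c, C c -> C (mul c g)].
have nS : nbhs one S.
  have := (iffLR (compact_near_coveringP C)) cC G (nbhs one)
    (fun g c => C (mul c g)) _.
  apply => c Cc.
  have nC : nbhs (mul (c, one).1 (c, one).2) C.
    by rewrite /= h2; apply: open_nbhs_nbhs; split.
  exact: (cm (c, one) C nC).
have nSi : nbhs one [set g | S (inv g)].
  have nS' : nbhs (inv one) S by rewrite (g_inv1 hG).
  exact: (ci one S nS').
pose V := [set g | S g /\ S (inv g)].
have nV : nbhs one V by apply: filterI.
have Vmul : forall g h, V g -> V h -> V (mul g h).
  move=> g h [Sg Sg'] [Sh Sh']; split => c Cc.
    by rewrite hA; apply: Sh; apply: Sg.
  by rewrite (g_invM hG) hA; apply: Sg'; apply: Sh'.
exists V; split.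
- exact: nbhs_singleton.
- exact: Vmul.
- by move=> g [Sg Sg']; split => //; rewrite (g_invK hG).
- have VC : V `<=` C by move=> g [Sg _]; rewrite -(h1 g); apply: Sg.
  apply: (subclosed_compact _ cC VC).
  have -> : V = \bigcap_(c in C) (mul c @^-1` C `&`
      (fun g => mul c (inv g)) @^-1` C).
    apply/seteqP; split => g.
      by move=> [Sg Sg'] c Cc; split; [apply: Sg|apply: Sg'].
    by move=> h; split => c Cc; have [] := h c Cc.
  apply: closed_bigI => c Cc; apply: closedI.
    exact: (iffLR (continuous_closedP _) (lmul_cont cm c) C clC).
  apply: (iffLR (continuous_closedP _)) => // w.
  exact: (continuous_comp (ci w) (lmul_cont cm c (inv w))).
- rewrite openE => v Vv.
  have nV' : nbhs (mul (inv v) v) V by rewrite h3.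
  have := lmul_cont cm (inv v) v V nV'.
  move=> hv; rewrite nbhs_simpl /= in hv.
  change (nbhs v V); apply: (filterS _ hv) => w /= Vw.
  rewrite -(g_mulKV hG v w); apply: Vmul => //.
Qed.

Unset Implicit Arguments.

Theorem lemma2 (G : topologicalType) (mul : G -> G -> G) (one : G)
    (inv : G -> G) (H : set (G -> G)) :
  tdlc_group mul one inv ->
  automorphism_group mul H ->
  [/\ (forall a, H a -> bounded_auts mul one inv [set a]),
      (forall A B, A `<=` B -> B `<=` H ->
         bounded_auts mul one inv B -> bounded_auts mul one inv A),
      (forall A B, A `<=` H -> B `<=` H ->
         bounded_auts mul one inv A -> bounded_auts mul one inv B ->
         bounded_auts mul one inv (A `|` B)),
      (forall A B, A `<=` H -> B `<=` H ->
         bounded_auts mul one inv A -> bounded_auts mul one inv B ->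
         bounded_auts mul one inv (aut_prod A B)) &
      (forall A, A `<=` H ->
         bounded_auts mul one inv A -> bounded_auts mul one inv (aut_inv A))].
Proof.
move=> tG hH; have tG' := tG; case: tG' => hG cm _ _ _.
have [aH Hid Hcomp Hinv] := hH.
split.
- move=> a Ha; apply: (bnd_bounded hG); first by move=> b ->; exact: aH.
  have [V cV] := cos_exists tG.
  by exists V; split => //; exists 1%N => b c -> ->; exact: (cov_refl _ hG).
- move=> A B AB BH [V [cV [M hM]]]; exists V; split => //.
  by exists M => b c Ab Ac; apply: hM; apply: AB.
- move=> A B AH BH bA bB.
  have AB' : A `|` B `<=` H by move=> x [/AH|/BH].
  apply: (bnd_bounded hG); first by move=> x /AB'; exact: aH.
  apply: (part3 hG cm aH AH BH).
    by apply: (bounded_bnd hG cm) => // x /AH; exact: aH.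
  by apply: (bounded_bnd hG cm) => // x /BH; exact: aH.
- move=> A B AH BH bA bB.
  have PH : aut_prod A B `<=` H by move=> _ [a Aa [b Bb <-]]; apply: Hcomp;
    [apply: AH|apply: BH].
  apply: (bnd_bounded hG); first by move=> x /PH; exact: aH.
  apply: (part4 hG cm aH AH BH).
    by apply: (bounded_bnd hG cm) => // x /AH; exact: aH.
  by apply: (bounded_bnd hG cm) => // x /BH; exact: aH.
- move=> A AH bA.
  have IH : aut_inv A `<=` H.
    move=> b [a Aa [ab ba]]; have [b' Hb' [ab' b'a]] := Hinv a (AH _ Aa).
    have -> : b = b' by apply/funext => y; rewrite -{1}(b'a y) ab.
    exact: Hb'.
  apply: (bnd_bounded hG); first by move=> x /IH; exact: aH.
  apply: (part5 hG cm hH AH).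
  by apply: (bounded_bnd hG cm) => // x /AH; exact: aH.
Qed.
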